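(* Let $M\ge1$, $\alpha\in(0,1)$, $R_{th}>0$ and $\varepsilon=2^{2R_{th}/(1-\alpha)}-1$. For link types $j\in\{SR,RD\}$ let IQI parameters $\xi_{t_j},\xi_{r_j}>0$, $\phi_{t_j},\phi_{r_j}\in\mathbb{R}$ be given (the same for all relays), with $\mu_{t_j}=\tfrac12(1+\xi_{t_j}e^{i\phi_{t_j}})$, $v_{t_j}=\tfrac12(1-\xi_{t_j}e^{-i\phi_{t_j}})$, $\mu_{r_j}=\tfrac12(1+\xi_{r_j}e^{-i\phi_{r_j}})$, $v_{r_j}=\tfrac12(1-\xi_{r_j}e^{i\phi_{r_j}})$, $p_j=|\mu_{t_j}\mu_{r_j}+v_{t_j}^*v_{r_j}|^2$, $q_j=|\mu_{r_j}v_{t_j}+\mu_{t_j}^*v_{r_j}|^2$, and assume $p_j-\varepsilon q_j>0$. Let $X_{SR_1},\dots,X_{SR_M},X_{R_1D},\dots,X_{R_MD}$ be independent, with $X_{SR_m}$ exponential of rate $\lambda_{SR}>0$ and $X_{R_mD}$ exponential of rate $\lambda_{RD}>0$ for all $m$. Let the estimation-error variances be $\sigma^2_{e_{SR}}=\sigma^2_{e_{RD}}=t>0$. For each $m$ define $$C^\infty_{SR_m}=\frac{1-\alpha}{2}\log_2\!\Big(1+\frac{X_{SR_m}p_{SR}}{\sigma^2_{e_{SR}}p_{SR}+X_{SR_m}q_{SR}+\sigma^2_{e_{SR}}q_{SR}}\Big),\quad C^\infty_{R_mD}=\frac{1-\alpha}{2}\log_2\!\Big(1+\frac{X_{R_mD}p_{RD}}{\sigma^2_{e_{RD}}p_{RD}+X_{R_mD}q_{RD}+\sigma^2_{e_{RD}}q_{RD}}\Big),$$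 and let $a=\arg\max_{1\le m\le M}C^\infty_{SR_m}$. Then $$\Pr\{\min(C^\infty_{SR_a},C^\infty_{R_aD})<R_{th}\}=1-\Big(1-\big(1-e^{-\lambda_{SR}H_3}\big)^M\Big)e^{-\lambda_{RD}H_4},$$ where $H_3=\dfrac{\varepsilon\sigma^2_{e_{SR}}(p_{SR}+q_{SR})}{p_{SR}-\varepsilon q_{SR}}$ and $H_4=\dfrac{\varepsilon\sigma^2_{e_{RD}}(p_{RD}+q_{RD})}{p_{RD}-\varepsilon q_{RD}}$.
   Context: Decode-and-forward relaying with $M$ relays and suboptimal relay selection: the relay $R_a$ is chosen to maximize the first-hop ($S\to R_m$) capacity. $X_j=|\hat h_j|^2$ are estimated Rayleigh channel gains, $\sigma^2_{e_j}$ channel-estimation-error variances, and $p_j,q_j$ are the I/Q-imbalance gain coefficients. The left-hand side is the asymptotic (high-SNR) outage probability; $z^*$ is complex conjugate, $i$ the imaginary unit. *)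

(* Defs.v *)
From HB Require Import structures.
From mathcomp Require Import all_boot all_order all_algebra.
From mathcomp Require Import all_classical all_reals all_analysis.
From mathcomp Require Import complex.
Set Implicit Arguments. Unset Strict Implicit. Unset Printing Implicit Defensive.
Import Order.TTheory GRing.Theory Num.Theory.
Local Open Scope classical_set_scope.
Local Open Scope complex_scope.
Local Open Scope ring_scope.

Definition cexpi {R : realType} (phi : R) : R[i] := Complex (cos phi) (sin phi).

Definition sqnorm {R : realType} (z : R[i]) : R := (Normc.normc z) ^+ 2.

Definition mu_t {R : realType} (xi phi : R) : R[i] := 2^-1 * (1 + xi%:C * cexpi phi).
Definition v_t  {R : realType} (xi phi : R) : R[i] := 2^-1 * (1 - xi%:C * cexpi (- phi)).
Definition mu_r {R : realType} (xi phi : R) : R[i] := 2^-1 * (1 + xi%:C * cexpi (- phi)).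
Definition v_r  {R : realType} (xi phi : R) : R[i] := 2^-1 * (1 - xi%:C * cexpi phi).

Definition pIQI {R : realType} (xit phit xir phir : R) : R :=
  sqnorm (mu_t xit phit * mu_r xir phir + conjc (v_t xit phit) * v_r xir phir).
Definition qIQI {R : realType} (xit phit xir phir : R) : R :=
  sqnorm (mu_r xir phir * v_t xit phit + conjc (mu_t xit phit) * v_r xir phir).

Definition log2 {R : realType} (x : R) : R := ln x / ln 2.

Definition Cinf {R : realType} (alpha sigma2 p q X : R) : R :=
  (1 - alpha) / 2 * log2 (1 + X * p / (sigma2 * p + X * q + sigma2 * q)).

Definition mutually_independent {d} {T : measurableType d} {R : realType}
  (P : probability T R) (I : finType) (X : I -> {RV P >-> R}) : Prop :=
  forall A : I -> set R, (forall i, measurable (A i)) ->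
    P (\bigcap_(i in [set: I]) (X i @^-1` A i)) = (\prod_(i : I) P (X i @^-1` A i))%E.

Definition is_exponential {d} {T : measurableType d} {R : realType}
  (P : probability T R) (X : {RV P >-> R}) (lam : R) : Prop :=
  forall A : set R, measurable A -> distribution P X A = exponential_prob lam A.
Arguments mutually_independent {d T R} P {I} X.
Arguments is_exponential {d T R} P X lam.

(* Main.v *)
Require Import Defs.
Set Warnings "-all".
From HB Require Import structures.
From mathcomp Require Import all_boot all_order all_algebra.
From mathcomp Require Import all_classical all_reals all_analysis.
From mathcomp Require Import complex.
From mathcomp Require Import measurable_realfun exponential_distribution.
From mathcomp Require Import ring lra.
Import Order.TTheory GRing.Theory Num.Theory.
Local Open Scope classical_set_scope.
Local Open Scope ring_scope.
Section helpers.
Context {d : measure_display} {T : measurableType d}.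

Lemma in_bigsetI_seq (I : eqType) (r : seq I) (F : I -> set T) w :
  (\big[setI/setT]_(i <- r) F i) w <-> (forall i, i \in r -> F i w).
Proof.
elim: r => [|x r IH]; first by rewrite big_nil; split.
rewrite big_cons; split.
  by move=> [Fx /IH Hr] i; rewrite inE => /orP[/eqP->|/Hr].
move=> H; split; first by apply: H; rewrite inE eqxx.
by apply/IH => i Hi; apply: H; rewrite inE Hi orbT.
Qed.

Lemma fin_bigcap_meas (I : finType) (F : I -> set T) :
  (forall i, measurable (F i)) -> measurable (\bigcap_(i in [set: I]) F i).
Proof.
move=> mF.
have -> : \bigcap_(i in [set: I]) F i = \big[setI/setT]_(i <- index_enum I) F i.
  apply/seteqP; split => w.
    by move=> H; apply/in_bigsetI_seq => i _; exact: H.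
  by move/in_bigsetI_seq => H i _; apply: H; rewrite mem_index_enum.
exact: bigsetI_measurable.
Qed.

Lemma fin_bigcup_meas (I : finType) (F : I -> set T) :
  (forall i, measurable (F i)) -> measurable (\bigcup_(i in [set: I]) F i).
Proof.
move=> mF; rewrite -[X in measurable X]setCK setC_bigcup.
by apply: measurableC; apply: fin_bigcap_meas => i; apply: measurableC.
Qed.

Lemma in_bigsetU_ord (n : nat) (F : 'I_n -> set T) w :
  (\big[setU/set0]_(i < n) F i) w <-> (exists i, F i w).
Proof.
rewrite -[X in X w]setCK.
have -> : (~` \big[setU/set0]_(i < n) F i) = \big[setI/setT]_(i < n) ~` F i.
  by rewrite (big_morph (fun A => ~` A) (@setCU _) (@setC0 _)).
split.
  move=> H; apply: contrapT => Hn; apply: H; apply/in_bigsetI_seq => i _ Fi.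
  by apply: Hn; exists i.
by move=> [i Fi] /in_bigsetI_seq /(_ i (mem_index_enum _)).
Qed.

End helpers.

Lemma bool_pre_meas {d} {T : measurableType d} (f : T -> bool) :
  measurable_fun setT f -> measurable [set w | f w].
Proof.
move=> mf; have := mf measurableT [set true] I.
by rewrite setTI; congr measurable; apply/seteqP; split => w /=.
Qed.

Lemma measurable_inv {R : realType} : measurable_fun [set: R] (@GRing.inv R).
Proof.
have -> : [set: R] = (`]-oo, 0[ `|` `]0, +oo[) `|` [set 0].
  apply/seteqP; split => x // _.
  case: (ltrgtP x 0) => hx; [left; left|left; right|right] => //=;
    by rewrite in_itv /= ?hx.
apply/measurable_funU => //; first exact: measurableU.
split; last exact: measurable_fun_set1.
apply/measurable_funU => //; split; apply: open_continuous_measurable_fun;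
  try exact: interval_open.
  by move=> x; rewrite inE /= in_itv /= => hx; apply: inv_continuous; rewrite lt_eqF.
by move=> x; rewrite inE /= in_itv /= andbT => hx; apply: inv_continuous; rewrite gt_eqF.
Qed.
Lemma measurable_Cinf {R : realType} (alpha s p q : R) :
  measurable_fun [set: R] (Cinf alpha s p q).
Proof.
rewrite /Cinf /log2.
apply: measurable_funM => //.
apply: measurable_funM => //.
apply: measurableT_comp; first exact: measurable_ln.
apply: measurable_funD => //.
apply: measurable_funM; first exact: measurable_funM.
apply: measurableT_comp; first exact: measurable_inv.
apply: measurable_funD => //.
apply: measurable_funD => //.
exact: measurable_funM.
Qed.

Lemma Cinf_lt {R : realType} (alpha Rth t p q x : R) :
  0 < alpha < 1 -> 0 < t -> 0 <= q -> 0 < Rth ->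
  let eps := expR ((2 * Rth / (1 - alpha)) * ln 2) - 1 in
  0 < p - eps * q -> 0 <= x ->
  (Cinf alpha t p q x < Rth) = (x < eps * t * (p + q) / (p - eps * q)).
Proof.
move=> /andP[a0 a1] t0 q0 R0 eps hp x0.
set z := (2 * Rth / (1 - alpha)) * ln 2.
have ln2 : 0 < ln (2:R) by apply: ln_gt0; lra.
have z0 : 0 < z by apply: mulr_gt0 => //; apply: divr_gt0; lra.
have eps0 : 0 < eps by rewrite /eps subr_gt0 expR_gt1.
have p0 : 0 < p by have := mulr_ge0 (ltW eps0) q0; lra.
set D := t * p + x * q + t * q.
have D0 : 0 < D by rewrite /D; have := mulr_gt0 t0 p0; have := mulr_ge0 x0 q0;
  have := mulr_ge0 (ltW t0) q0; lra.
have y0 : 0 < 1 + x * p / D by have := divr_ge0 (mulr_ge0 x0 (ltW p0)) (ltW D0); lra.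
set k := (1 - alpha) / 2 / ln 2.
have k0 : 0 < k by rewrite /k; apply: divr_gt0 => //; lra.
have -> : Cinf alpha t p q x = k * ln (1 + x * p / D).
  by rewrite /Cinf /log2 /k /D; field; rewrite gt_eqF.
have -> : Rth = k * z.
  rewrite /k /z; field; rewrite !gt_eqF //; lra.
rewrite ltr_pM2l // -[(ln _ < z)]ltr_expR.
rewrite lnK ?posrE //.
have -> : expR z = 1 + eps by rewrite /eps; ring.
rewrite ltrD2l ltr_pdivrMr // ltr_pdivlMr //.
rewrite -subr_gt0 -[X in _ = X]subr_gt0.
by congr (0 < _); rewrite /D; ring.
Qed.
Lemma expo_K {R : realType} (lam H : R) (K : set R) :
  0 < lam -> 0 < H -> measurable K -> (forall x, 0 <= x -> K x <-> x < H) ->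
  exponential_prob lam K = (1 - expR (- lam * H))%:E.
Proof.
move=> l0 H0 mK HK.
have mpdf : measurable_fun setT (EFin \o exponential_pdf lam).
  by apply/measurable_EFinP; exact: measurable_exponential_pdf.
have pdf0 : forall x, (0 <= (exponential_pdf lam x)%:E)%E.
  by move=> x; rewrite lee_fin exponential_pdf_ge0 // ltW.
have -> : K = (K `&` `]-oo, 0[) `|` `[0, H[.
  apply/seteqP; split => x.
    move=> Kx; case: (boolP (x < 0)) => hx.
      by left; split => //=; rewrite in_itv /= hx.
    have hx0 : 0 <= x by rewrite leNgt.
    by right; rewrite /= in_itv /= hx0 /=; apply/HK.
  move=> [[]//|] /=; rewrite in_itv /= => /andP[hx hxH]; exact/HK.
rewrite /exponential_prob ge0_integral_setU //; first last.
- apply/disj_setPS => x [[_]] /=; rewrite !in_itv /= => h1 /andP[h2 _]; lra.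
- exact: measurable_funTS.
- by apply: measurableI.
rewrite integral0_eq ?add0e; last first.
  by move=> x [_] /=; rewrite in_itv /= => hx; rewrite lt0_exponential_pdf.
have := exponential_prob_itv0c lam H0; rewrite /exponential_prob.
have -> : `[0, H]%classic = `[0, H[ `|` [set H] :> set R.
  apply/seteqP; split => x /=; rewrite !in_itv /=.
    move=> /andP[h1 h2]; case: (ltP x H) => h3; [left|right]; first by rewrite h1.
    by apply/eqP; rewrite eq_le h2.
  move=> [/andP[h1 h2]|->]; first by rewrite h1 ltW.
  by rewrite lexx andbT ltW.
rewrite ge0_integral_setU //; first last.
- apply/disj_setPS => x [] /=; rewrite !in_itv /= => /andP[_ h] hx; lra.
- exact: measurable_funTS.
by rewrite integral_set1 adde0.
Qed.
Lemma indep_dynkin {d} {T : measurableType d} {R : realType} (P : probability T R)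
  (G : set (set T)) (B : set T) :
  measurable B -> G `<=` measurable -> setI_closed G ->
  (forall S, G S -> P (S `&` B) = (P S * P B)%E) ->
  forall S, <<s G >> S -> measurable S /\ P (S `&` B) = (P S * P B)%E.
Proof.
move=> mB GM GI GP.
pose T' := g_sigma_algebraType G.
apply: (@dynkin_induction _ T' G
  (fun S : set T' => measurable (S : set T) /\ P (S `&` B) = (P S * P B)%E)) => //.
- by split; [exact: measurableT|rewrite setTI probability_setT mul1e].
- by move=> S GS; split; [exact: GM|exact: GP].
- move=> S _ [mS PS]; split; first exact: measurableC.
  rewrite probability_setC // setIC -setDE measureD //; last first.
    exact: (le_lt_trans (probability_le1 P mB) (ltey 1)).
  have PS2 : P (B `&` S) = (P S * P B)%E by rewrite setIC; exact: PS.
  change (P B - P (B `&` S) = (1 - P S) * P B)%E.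
  rewrite PS2.
  have fS : P S \is a fin_num by rewrite fin_num_measure.
  have fB : P B \is a fin_num by rewrite fin_num_measure.
  rewrite -(fineK fS) -(fineK fB) -!EFinM -!EFinB; congr EFin; ring.
- move=> F mF tF PF; split.
    by apply: bigcup_measurable => k _; exact: (PF k).1.
  have fB : P B \is a fin_num by rewrite fin_num_measure.
  rewrite setI_bigcupl.
  rewrite measure_bigcup; first last.
  - by apply: trivIset_setIr.
  - by move=> i _; apply: measurableI => //; exact: (PF i).1.
  transitivity (\sum_(0 <= i <oo | i \in [set: nat]) ((fine (P B))%:E * P (F i)))%E.
    apply: eq_eseriesr => i _; rewrite muleC fineK //; exact: (PF i).2.
  rewrite nneseriesZl; last by move=> i _.
  rewrite (@measure_bigcup _ _ _ P [set: nat] F (fun i _ => (PF i).1) tF).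
  by rewrite muleC fineK.
Qed.
Theorem corollary3 (R : realType) (d : measure_display) (T : measurableType d)
  (P : probability T R) (M : nat) (hM : (0 < M)%N)
  (alpha Rth : R) (halpha : 0 < alpha < 1) (hRth : 0 < Rth)
  (xit_SR phit_SR xir_SR phir_SR xit_RD phit_RD xir_RD phir_RD : R)
  (hxi : [/\ 0 < xit_SR, 0 < xir_SR, 0 < xit_RD & 0 < xir_RD])
  (lamSR lamRD t : R) (hlamSR : 0 < lamSR) (hlamRD : 0 < lamRD) (ht : 0 < t)
  (XSR XRD : 'I_M -> {RV P >-> R}) :
  let eps := expR ((2 * Rth / (1 - alpha)) * ln 2) - 1 in
  let pSR := pIQI xit_SR phit_SR xir_SR phir_SR in
  let qSR := qIQI xit_SR phit_SR xir_SR phir_SR in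
  let pRD := pIQI xit_RD phit_RD xir_RD phir_RD in
  let qRD := qIQI xit_RD phit_RD xir_RD phir_RD in
  0 < pSR - eps * qSR -> 0 < pRD - eps * qRD ->
  mutually_independent P (fun k : 'I_M + 'I_M =>
    match k with inl m => XSR m | inr m => XRD m end) ->
  (forall m, is_exponential P (XSR m) lamSR) ->
  (forall m, is_exponential P (XRD m) lamRD) ->
  let CSR m w := Cinf alpha t pSR qSR (XSR m w) in
  let CRD m w := Cinf alpha t pRD qRD (XRD m w) in
  let a w := Order.arg_max (Ordinal hM) xpredT (fun m => CSR m w) in
  let H3 := eps * t * (pSR + qSR) / (pSR - eps * qSR) in
  let H4 := eps * t * (pRD + qRD) / (pRD - eps * qRD) in
  P [set w | Num.min (CSR (a w) w) (CRD (a w) w) < Rth] =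
    (1 - (1 - (1 - expR (- lamSR * H3)) ^+ M) * expR (- lamRD * H4))%:E.
Proof.
move=> eps pSR qSR pRD qRD hSR hRD Hind HexS HexR CSR CRD a H3 H4.
have sq0 : forall z : R[i], 0 <= sqnorm z by move=> z; rewrite /sqnorm sqr_ge0.
have qSR0 : 0 <= qSR by exact: sq0.
have qRD0 : 0 <= qRD by exact: sq0.
have eps0 : 0 < eps.
  rewrite /eps subr_gt0 expR_gt1; apply: mulr_gt0; last by apply: ln_gt0; lra.
  case/andP: halpha => a0 a1; apply: divr_gt0; lra.
have H3pos : 0 < H3.
  have p0 : 0 < pSR by have := mulr_ge0 (ltW eps0) qSR0; lra.
  by rewrite /H3; apply: divr_gt0 => //; apply: mulr_gt0;
    [exact: mulr_gt0|lra].
have H4pos : 0 < H4.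
  have p0 : 0 < pRD by have := mulr_ge0 (ltW eps0) qRD0; lra.
  by rewrite /H4; apply: divr_gt0 => //; apply: mulr_gt0;
    [exact: mulr_gt0|lra].
have mX : forall (X : {RV P >-> R}) A, measurable A -> measurable (X @^-1` A).
  by move=> X A mA; exact: measurable_funPTI.
pose KS := [set x : R | Cinf alpha t pSR qSR x < Rth].
pose KR := [set x : R | Cinf alpha t pRD qRD x < Rth].
have mK : forall p q, measurable [set x : R | Cinf alpha t p q x < Rth].
  move=> p q; rewrite -[X in measurable X]setTI.
  have -> : [set x : R | Cinf alpha t p q x < Rth] =
    Cinf alpha t p q @^-1` `]-oo, Rth[.
    by apply/seteqP; split => x /=; rewrite in_itv.
  exact: (measurable_Cinf alpha t p q) measurableT _ (measurable_itv _).
have PKS : forall i, P (XSR i @^-1` KS) = (1 - expR (- lamSR * H3))%:E.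
  move=> i; have := HexS i KS (mK _ _).
  rewrite /distribution /pushforward /= => ->.
  apply: expo_K => //; first exact: mK.
  by move=> x x0; rewrite /KS /= Cinf_lt.
have PKR : forall i, P (XRD i @^-1` KR) = (1 - expR (- lamRD * H4))%:E.
  move=> i; have := HexR i KR (mK _ _).
  rewrite /distribution /pushforward /= => ->.
  apply: expo_K => //; first exact: mK.
  by move=> x x0; rewrite /KR /= Cinf_lt.
have rect : forall F Kf : 'I_M -> set R,
    (forall i, measurable (F i)) -> (forall j, measurable (Kf j)) ->
    P (\bigcap_(i in [set: 'I_M]) (XSR i @^-1` F i) `&`
       \bigcap_(j in [set: 'I_M]) (XRD j @^-1` Kf j)) =
    (\prod_(i < M) P (XSR i @^-1` F i) * \prod_(j < M) P (XRD j @^-1` Kf j))%E.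
  move=> F Kf mF mKf.
  have := Hind (fun k => match k with inl i => F i | inr j => Kf j end)
    ltac:(by case).
  rewrite big_sumType /= => <-; congr (P _).
  apply/seteqP; split => w.
    by move=> [h1 h2] [i|j] _ /=; [exact: h1|exact: h2].
  by move=> h; split => i _; [exact: (h (inl i) I)|exact: (h (inr i) I)].
pose G := [set S : set T | exists F : 'I_M -> set R,
  (forall i, measurable (F i)) /\ S = \bigcap_(i in [set: 'I_M]) (XSR i @^-1` F i)].
have indB : forall m K, measurable K -> forall S, <<s G >> S ->
    measurable S /\ P (S `&` XRD m @^-1` K) = (P S * P (XRD m @^-1` K))%E.
  move=> m K mK0; apply: indep_dynkin; first exact: mX.
  - move=> S [F [mF ->]]; apply: fin_bigcap_meas => i; exact: mX.
  - move=> A B /= [F [mF ->]] [F' [mF' ->]]; exists (fun i => F i `&` F' i); split.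
      by move=> i; exact: measurableI.
    apply/seteqP; split => w.
      by move=> [h1 h2] i _; split; [exact: h1|exact: h2].
    by move=> h; split => i _; have [] := h i I.
  move=> S [F [mF ->]].
  have r1 := rect F (fun j => if j == m then K else setT) mF
    ltac:(move=> j /=; case: (j == m); [exact mK0|exact measurableT]).
  have r0 := rect F (fun j => setT) mF ltac:(move=> j; exact: measurableT).
  have e1 : \bigcap_(j in [set: 'I_M]) (XRD j @^-1` (if j == m then K else setT))
      = XRD m @^-1` K.
    apply/seteqP; split => w.
      by move=> h; have := h m I; rewrite eqxx.
    by move=> h j _; case: ifP => [/eqP->|].
  have e0 : \bigcap_(j in [set: 'I_M]) (XRD j @^-1` (@setT R)) = setT.
    by apply/seteqP; split.
  have p1 : (\prod_(j < M) P (XRD j @^-1` (if j == m then K else setT)))%E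
      = P (XRD m @^-1` K).
    rewrite (bigD1 m) //= eqxx big1 ?mule1 // => j /negbTE ->.
    by rewrite preimage_setT probability_setT.
  have p0 : (\prod_(j < M) P (XRD j @^-1` (@setT R)))%E = 1%E.
    by rewrite big1 // => j _; rewrite preimage_setT probability_setT.
  rewrite e1 p1 in r1; rewrite e0 p0 setIT mule1 in r0.
  by rewrite r1 r0.
have mXS' : forall i, measurable_fun (setT : set (g_sigma_algebraType G))
    (XSR i : g_sigma_algebraType G -> R).
  move=> i _ Y mY; rewrite setTI; apply: sub_sigma_algebra.
  exists (fun j => if j == i then Y else setT); split.
    by move=> j /=; case: (j == i); [exact mY|exact measurableT].
  apply/seteqP; split => w /=.
    by move=> Yw j _; case: ifP => [/eqP->|_].
  by move=> h; have := h i I; rewrite eqxx.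
have mCS' : forall i, measurable_fun (setT : set (g_sigma_algebraType G))
    (fun w : g_sigma_algebraType G => CSR i w).
  move=> i; exact: (measurableT_comp (measurable_Cinf alpha t pSR qSR) (mXS' i)).
have mle : forall i j, <<s G >> [set w : T | CSR j w <= CSR i w].
  move=> i j.
  exact: (@bool_pre_meas _ (g_sigma_algebraType G) _
    (measurable_fun_ler (mCS' j) (mCS' i))).
have mge : forall i, <<s G >> [set w : T | Rth <= CSR i w].
  move=> i.
  exact: (@bool_pre_meas _ (g_sigma_algebraType G) _
    (measurable_fun_ler (measurable_cst Rth) (mCS' i))).
pose Q i := [set w : T | forall j, CSR j w <= CSR i w].
have mQ : forall i, <<s G >> (Q i).
  move=> i; have -> : Q i = \bigcap_(j in [set: 'I_M]) [set w | CSR j w <= CSR i w].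
    by apply/seteqP; split => w /= h j; [move=> _|]; apply: h.
  exact: (@fin_bigcap_meas _ (g_sigma_algebraType G) 'I_M _ (fun j => mle i j)).
have a_char : forall w, a w =
    odflt (Ordinal hM) [pick i | [forall j, CSR j w <= CSR i w]].
  move=> w; rewrite /a /Order.arg_max /extremum; congr odflt; apply: eq_pick => i /=.
pose GT := g_sigma_algebraType G.
have ma : forall m, <<s G >> [set w : T | a w = m].
  move=> m.
  have -> : [set w : T | a w = m] = \bigcup_(S in [set: {set 'I_M}])
      ([set w | forall i, (i \in S) <-> Q i w] `&`
       [set _ | odflt (Ordinal hM) [pick i in S] = m]).
    apply/seteqP; split => w /=.
      move=> <-; exists [set i | [forall j, CSR j w <= CSR i w]]%SET => //; split => /=.
        move=> i; rewrite inE; split; first by move/forallP.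
        by move=> h; apply/forallP.
      rewrite a_char; congr odflt; apply: eq_pick => i /=; by rewrite inE.
    move=> [S _ [hS hm]]; rewrite a_char -hm; congr odflt; apply: eq_pick => i /=.
    apply/idP/idP => [/forallP h|h]; first by apply/hS.
    by apply/forallP; apply/hS.
  apply: (@fin_bigcup_meas _ GT) => S; apply: (@measurableI _ GT).
    have -> : [set w | forall i, (i \in S) <-> Q i w] =
        \bigcap_(i in [set: 'I_M]) (if i \in S then Q i else ~` Q i).
      apply/seteqP; split => w h.
        move=> i _; case hi : (i \in S) => /=; first exact: (h i).1.
        by move=> Qw; have := (h i).2 Qw; rewrite hi.
      move=> i; split.
        by move=> hi; have := h i I; rewrite hi.
      by move=> Qw; case hi : (i \in S) => //; have := h i I; rewrite hi => /(_ Qw).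
    apply: (@fin_bigcap_meas _ GT) => i; case: (i \in S); first exact: mQ.
    exact: (@measurableC _ GT _ (mQ i)).
  have [h|h] := eqVneq (odflt (Ordinal hM) [pick i in S]) m.
    have -> : [set _ : T | odflt (Ordinal hM) [pick i in S] = m] = setT.
      by apply/seteqP; split => // w _ /=; rewrite h.
    exact: (@measurableT _ GT).
  have -> : [set _ : T | odflt (Ordinal hM) [pick i in S] = m] = set0.
    by apply/seteqP; split => // w /= /eqP; rewrite (negbTE h).
  exact: (@measurable0 _ GT).
pose A m := [set w : T | a w = m] `&` [set w | Rth <= CSR m w].
have sA : forall m, <<s G >> (A m).
  move=> m; exact: (@measurableI _ GT _ _ (ma m) (mge m)).
have mA : forall m, measurable (A m).
  by move=> m; exact: (indB m setT measurableT (A m) (sA m)).1.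
pose B m := XRD m @^-1` (~` KR).
have mB : forall m, measurable (B m).
  by move=> m; apply: mX; apply: measurableC; exact: mK.
have PB : forall m, P (B m) = (expR (- lamRD * H4))%:E.
  move=> m; rewrite /B -preimage_setC probability_setC; last exact: mX (mK _ _).
  by rewrite PKR -EFinB; congr EFin; ring.
have PAB : forall m, P (A m `&` B m) = (P (A m) * (expR (- lamRD * H4))%:E)%E.
  move=> m; rewrite -(PB m).
  exact: (indB m (~` KR) (measurableC (mK _ _)) (A m) (sA m)).2.
have amax : forall w j, CSR j w <= CSR (a w) w.
  by move=> w; rewrite /a; case: arg_maxP => //= i _ h j; apply: h.
have Eeq : [set w | Num.min (CSR (a w) w) (CRD (a w) w) < Rth] =
    ~` \big[setU/set0]_(m < M) (A m `&` B m).
  apply/seteqP; split => w.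
    move=> /= hmin /in_bigsetU_ord [m [[/= am hm] hr]].
    move: hmin; rewrite am gt_min => /orP[h|h].
      by move: hm; rewrite leNgt h.
    by apply: hr.
  move=> /= hn; apply: contrapT => hmin; apply: hn; apply/in_bigsetU_ord.
  exists (a w); split; first split => //=.
    by rewrite leNgt; apply/negP => h; apply: hmin; rewrite gt_min h.
  by move=> /= h; apply: hmin; rewrite gt_min h orbT.
have tA : trivIset [set: 'I_M] A.
  by move=> i j _ _ [w [[ai _] [aj _]]]; rewrite -ai -aj.
have tAB : trivIset [set: 'I_M] (fun m => A m `&` B m).
  by move=> i j _ _ [w [[[ai _] _] [[aj _] _]]]; rewrite -ai -aj.
have UA : \big[setU/set0]_(m < M) A m = ~` \bigcap_(i in [set: 'I_M]) (XSR i @^-1` KS).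
  apply/seteqP; split => w.
    move/in_bigsetU_ord => [m [/= am hm]] h; have := h m I.
    by rewrite /KS /= ltNge; rewrite -/(CSR m w) hm.
  move=> /= hn; apply/in_bigsetU_ord; exists (a w); split => //=.
  rewrite leNgt; apply/negP => h; apply: hn => j _ /=.
  exact: (le_lt_trans (amax w j) h).
have PI : P (\bigcap_(i in [set: 'I_M]) XSR i @^-1` KS) =
    ((1 - expR (- lamSR * H3)) ^+ M)%:E.
  have := rect (fun _ => KS) (fun _ => setT) (fun _ => mK _ _) (fun _ => measurableT).
  rewrite [X in P X = _ -> _](_ : _ = \bigcap_(i in [set: 'I_M]) XSR i @^-1` KS);
    last first.
    by apply/seteqP; split => w; [case|move=> h; split].
  move=> ->; rewrite [X in (_ * X)%E]big1 ?mule1; last first.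
    by move=> j _; rewrite preimage_setT probability_setT.
  under eq_bigr do rewrite PKS.
  rewrite prodEFin big_const_ord; congr EFin.
  by elim: (M) => [|n IH] /=; rewrite ?expr0 // IH exprS.
rewrite Eeq probability_setC; last first.
  by apply: bigsetU_measurable => m _; apply: measurableI.
rewrite measure_bigsetU_ord //; last by move=> m; apply: measurableI.
rewrite (eq_bigr (fun m => (P (A m) * (expR (- lamRD * H4))%:E)%E)); last first.
  by move=> m _; exact: PAB m.
rewrite -ge0_sume_distrl; last by move=> m _; apply: measure_ge0.
have PU : (\sum_(m < M) P (A m))%E = (1 - (1 - expR (- lamSR * H3)) ^+ M)%:E.
  rewrite -measure_bigsetU_ord //.
  change (P (\big[setU/set0]_(m < M) A m) = (1 - (1 - expR (- lamSR * H3)) ^+ M)%:E).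
  rewrite UA probability_setC; last first.
    by apply: fin_bigcap_meas => i; apply: mX; exact: mK.
  by rewrite PI -EFinB.
by rewrite PU -EFinM -EFinB.
Qed.
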